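(* Let $(X,P)$ be an $(N,s)$-tiling space and let $\epsilon\in(0,1)$. Then $(X^\epsilon,P)$ is an $(N,s^\epsilon)$-tiling space.
   Context: $X^\epsilon$ is the snowflake of $X$: the set $X$ with metric $d_X(x,y)^\epsilon$. $\mathbb{N}=\{0,1,\dots\}$. A covering structure on $X$ is a map $P$ from $\mathbb{N}$ or $\mathbb{Z}$ to coverings of $X$; $P_n$ its value, $\mathrm{dom}(P)$ its domain; $[T]_k=\{A\in P_{n+k}:A\subset T\}$ for $T\in P_n$. $(X,P)$ is an $N$-tiling set if (S1) for $n<m$ in $\mathrm{dom}(P)$, $A\in P_n$: $\mathrm{card}[A]_{m-n}=N^{m-n}$ and $A=\bigcup[A]_{m-n}$; (S2) for $A,B\in P_n$ there exist $m$ and $C\in P_m$ with $A\cup B\subset C$. Tiles are elements of the $P_n$. For $X$ a metric space ($\delta$ = diameter, $U(p,r)$ open ball, $hY$ = $Y$ with metric multiplied by $h$), $s\in(0,\infty)$, an $N$-tiling set is an $(N,s)$-pre-tiling space if (T1) there are $D_1,D_2>0$ with $D_1\le\delta(A)/s^n\le D_2$ for all $n\in\mathrm{dom}(P)$, $A\in P_n$; (T2) there is $E>0$ such that every $A\in P_n$ contains some $p_A$ with $U(p_A,Es^n)\subset A$. It is an $(N,s)$-tiling space if moreover (U) every sequence of tiles $(A_i)$ has a subsequence $(A_{\phi(i)})$ with $\delta(A_{\phi(i)})^{-1}A_{\phi(i)}$ converging in the Gromov–Hausdorff sense to $\delta(T)^{-1}T$ for some tile $T$. *)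

(* Defs.v *)
From HB Require Import structures.
From mathcomp Require Import all_boot all_order all_algebra.
From mathcomp Require Import all_classical all_reals all_analysis.
Set Implicit Arguments. Unset Strict Implicit. Unset Printing Implicit Defensive.
Import Order.TTheory GRing.Theory Num.Theory.
Local Open Scope classical_set_scope.
Local Open Scope ring_scope.

Section TilingDefs.
Variable R : realType.

Definition is_metric (X : Type) (d : X -> X -> R) : Prop :=
  (forall x y, 0 <= d x y) /\ (forall x y, d x y = 0 <-> x = y) /\
  (forall x y, d x y = d y x) /\ (forall x y z, d x z <= d x y + d y z).

Definition snowflake (X : Type) (eps : R) (d : X -> X -> R) : X -> X -> R :=
  fun x y => d x y `^ eps.

(* diameter (extended real; -oo for the empty set, +oo if unbounded) *)
Definition diam (X : Type) (d : X -> X -> R) (A : set X) : \bar R :=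
  ereal_sup [set z | exists x y, A x /\ A y /\ z = (d x y)%:E].

Definition oball (X : Type) (d : X -> X -> R) (p : X) (r : R) : set X :=
  [set y | d p y < r].

Definition covering_structure (X : Type) (dom : set int) (P : int -> set (set X)) : Prop :=
  (dom = [set n : int | 0 <= n] \/ dom = setT) /\
  (forall n, dom n -> \bigcup_(A in P n) A = setT).

Definition subtiles (X : Type) (P : int -> set (set X)) (n : int) (k : nat) (T : set X)
  : set (set X) := [set A | P (n + k%:Z) A /\ A `<=` T].

Definition tiling_set (X : Type) (dom : set int) (P : int -> set (set X)) (N : nat) : Prop :=
  covering_structure dom P /\
  (forall n (k : nat), dom n -> (0 < k)%N -> forall A, P n A ->
      (subtiles P n k A #= `I_(N ^ k))%card /\ A = \bigcup_(B in subtiles P n k A) B) /\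
  (forall n A B, dom n -> P n A -> P n B ->
      exists m C, dom m /\ P m C /\ A `|` B `<=` C).

Definition is_tile (X : Type) (dom : set int) (P : int -> set (set X)) (A : set X) : Prop :=
  exists n, dom n /\ P n A.

Definition pre_tiling_space (X : Type) (d : X -> X -> R) (dom : set int)
  (P : int -> set (set X)) (N : nat) (s : R) : Prop :=
  tiling_set dom P N /\
  (exists D1 D2 : R, 0 < D1 /\ 0 < D2 /\ forall n A, dom n -> P n A ->
      ((D1 * s ^ n)%:E <= diam d A)%E /\ (diam d A <= (D2 * s ^ n)%:E)%E) /\
  (exists E : R, 0 < E /\ forall n A, dom n -> P n A ->
      exists p, A p /\ oball d p (E * s ^ n) `<=` A).

(* The metric spaces (A, c1 * d|_A) and (B, c2 * d|_B) are within Gromov-Hausdorff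
   distance e, witnessed by isometric embeddings into a common metric space Z
   whose images are mutually e-close (Hausdorff distance). *)
Definition GH_close (X : Type) (d : X -> X -> R) (c1 : R) (A : set X)
  (c2 : R) (B : set X) (e : R) : Prop :=
  exists (Z : Type) (dZ : Z -> Z -> R) (f g : X -> Z),
    is_metric dZ /\
    (forall x y, A x -> A y -> dZ (f x) (f y) = c1 * d x y) /\
    (forall x y, B x -> B y -> dZ (g x) (g y) = c2 * d x y) /\
    (forall x, A x -> exists y, B y /\ dZ (f x) (g y) < e) /\
    (forall y, B y -> exists x, A x /\ dZ (f x) (g y) < e).

Definition GH_converges_rescaled (X : Type) (d : X -> X -> R) (A : nat -> set X)
  (T : set X) : Prop :=
  forall e : R, 0 < e -> exists i0 : nat, forall i : nat, (i0 <= i)%N ->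
    GH_close d (fine (diam d (A i)))^-1 (A i) (fine (diam d T))^-1 T e.

Definition tiling_space (X : Type) (d : X -> X -> R) (dom : set int)
  (P : int -> set (set X)) (N : nat) (s : R) : Prop :=
  pre_tiling_space d dom P N s /\
  (forall A : nat -> set X, (forall i, is_tile dom P (A i)) ->
     exists phi : nat -> nat, {homo phi : i j / (i < j)%N} /\
       exists T, is_tile dom P T /\ GH_converges_rescaled d (fun i => A (phi i)) T).

End TilingDefs.

(* Main.v *)
Require Import Defs.
From HB Require Import structures.
From mathcomp Require Import all_boot all_order all_algebra.
From mathcomp Require Import all_classical all_reals all_analysis.
Import Order.TTheory GRing.Theory Num.Theory.
Local Open Scope classical_set_scope.
Local Open Scope ring_scope.

Section Helpers.
Context {R : realType}.

Lemma powR_exprz (s eps : R) (n : int) : 0 <= s ->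
  (s ^ n) `^ eps = (s `^ eps) ^ n.
Proof.
move=> s0; rewrite -powR_intmul // powRAC powR_intmul //; exact: powR_ge0.
Qed.

Lemma powR_invr (a eps : R) : 0 <= a -> (a^-1) `^ eps = (a `^ eps)^-1.
Proof.
move=> a0; rewrite -powR_inv1 // powRAC powR_inv1 //; exact: powR_ge0.
Qed.

Lemma powR_subadd (eps a b : R) : 0 < eps <= 1 -> 0 <= a -> 0 <= b ->
  (a + b) `^ eps <= a `^ eps + b `^ eps.
Proof.
move=> /andP[e0 e1] a0 b0.
have [->|ab0] := eqVneq (a + b) 0.
  by rewrite powR0 ?gt_eqF // addr_ge0 // powR_ge0.
have ab : 0 < a + b by rewrite lt_def ab0 addr_ge0.
have key : forall t, 0 <= t -> t <= a + b -> t / (a + b) <= t `^ eps * ((a + b) `^ eps)^-1.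
  move=> t t0 tab; rewrite -powR_invr ?(ltW ab) // -powRM ?invr_ge0 ?(ltW ab) //.
  have [->|tn0] := eqVneq t 0; first by rewrite mul0r powR_ge0.
  have tp : 0 < t by rewrite lt_def tn0 t0.
  by apply: ger1_powR => //; rewrite divr_gt0 //= ler_pdivrMr // mul1r.
have ka := key a a0; rewrite lerDl in ka; have {}ka := ka b0.
have kb := key b b0; rewrite lerDr in kb; have {}kb := kb a0.
have := lerD ka kb; rewrite -mulrDl -mulrDl divff ?ab0 //.
have pe : 0 < (a + b) `^ eps by rewrite powR_gt0.
by rewrite ler_pdivlMr // mul1r.
Qed.

Lemma snowflake_metric (X : Type) (d : X -> X -> R) (eps : R) :
  0 < eps <= 1 -> is_metric d -> is_metric (snowflake eps d).
Proof.
move=> /andP[e0 e1] [d0 [dz [ds dt]]]; rewrite /snowflake; split; first by move=> *; exact: powR_ge0.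
split.
  move=> x y; split; first by move/powR_eq0_eq0/dz.
  by move/dz => ->; rewrite powR0 // gt_eqF.
split; first by move=> x y; rewrite ds.
move=> x y z; apply: le_trans; last (apply: powR_subadd; rewrite ?e0 ?e1 ?d0 //).
by apply: ge0_ler_powR; rewrite ?nnegrE ?(ltW e0) ?d0 ?addr_ge0 ?dt.
Qed.


Lemma diam_snow (X : Type) (d : X -> X -> R) (eps D : R) (A : set X) :
  0 < eps -> (forall x y, 0 <= d x y) -> 0 < D -> diam d A = D%:E ->
  diam (snowflake eps d) A = (D `^ eps)%:E.
Proof.
move=> e0 d0 D0 hD.
have dle : forall x y, A x -> A y -> d x y <= D.
  move=> x y Ax Ay; rewrite -lee_fin -hD; apply: ereal_sup_ubound.
  by exists x, y.
apply/eqP; rewrite eq_le; apply/andP; split.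
  apply/ereal_supP => _ [x [y [Ax [Ay ->]]]]; rewrite lee_fin.
  by apply: ge0_ler_powR; rewrite ?nnegrE ?(ltW e0) ?(ltW D0) ?d0 ?dle.
rewrite leNgt; apply/negP => Hlt.
set S := diam (snowflake eps d) A in Hlt.
have Dp : 0 < D `^ eps by rewrite powR_gt0.
have [t [t0 [St tD]]] : exists t, 0 <= t /\ (S <= t%:E)%E /\ t < D `^ eps.
  move: Hlt; case: S => [r| |] //= Hr.
    rewrite lte_fin in Hr.
    have [r0|r0] := leP 0 r; first by exists r; rewrite lee_fin.
    by exists 0; rewrite lee_fin (ltW r0).
  by exists 0; rewrite lexx leNye.
have ei0 : 0 < eps^-1 by rewrite invr_gt0.
have : ((t `^ eps^-1)%:E < diam d A)%E.
  rewrite hD lte_fin.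
  have -> : D = (D `^ eps) `^ eps^-1 by rewrite -powRrM divff ?gt_eqF // powRr1 // ltW.
  by apply: gt0_ltr_powR; rewrite ?nnegrE ?(ltW Dp).
move/ereal_sup_gt => [_ [x [y [Ax [Ay ->]]]]]; rewrite lte_fin => H.
have : ((snowflake eps d x y)%:E <= S)%E by apply: ereal_sup_ubound; exists x, y.
have : t < snowflake eps d x y.
  rewrite /snowflake.
  have {1}-> : t = (t `^ eps^-1) `^ eps by rewrite -powRrM mulVf ?gt_eqF // powRr1.
  by apply: gt0_ltr_powR; rewrite ?nnegrE ?powR_ge0 ?d0.
move=> lt1 le1; have := le_trans le1 St; rewrite lee_fin => le2.
by have := lt_le_trans lt1 le2; rewrite ltxx.
Qed.

End Helpers.

Arguments snowflake_metric {R X d eps}.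
Arguments diam_snow {R X d eps D A}.

Theorem proposition3p13 (R : realType) (X : Type) (d : X -> X -> R)
  (dom : set int) (P : int -> set (set X)) (N : nat) (s eps : R) :
  is_metric d -> 0 < s -> tiling_space d dom P N s ->
  0 < eps < 1 ->
  tiling_space (snowflake eps d) dom P N (s `^ eps).
Proof.
move=> dm s0 [[TS [[D1 [D2 [D10 [D20 T1]]]] [E [E0 T2]]]] U] /andP[e0 e1].
have e01 : 0 < eps <= 1 by rewrite e0 ltW.
have d0 := dm.1.
have tileD : forall n A, dom n -> P n A -> exists D, 0 < D /\ diam d A = D%:E /\
    D1 * s ^ n <= D /\ D <= D2 * s ^ n.
  move=> n A dn PA; have [] := T1 n A dn PA; have sn : 0 < s ^ n by rewrite exprz_gt0.
  case: (diam d A) => [r| |] //= l u.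
    rewrite !lee_fin in l u; exists r; split => //.
    exact: lt_le_trans (mulr_gt0 D10 sn) l.
have dm' := snowflake_metric e01 dm.
split.
  split; first exact: TS.
  split.
    exists (D1 `^ eps), (D2 `^ eps); split; first exact: powR_gt0.
    split; first exact: powR_gt0.
    move=> n A dn PA; have [D [D0 [hD [l u]]]] := tileD n A dn PA.
    have sn : 0 < s ^ n by rewrite exprz_gt0.
    rewrite (diam_snow e0 d0 D0 hD) !lee_fin -powR_exprz ?(ltW s0) //.
    rewrite -!powRM ?(ltW D10) ?(ltW D20) ?(ltW sn) //.
    by split; apply: ge0_ler_powR; rewrite ?nnegrE ?(ltW e0) ?(ltW D0) ?mulr_ge0 ?(ltW D10) ?(ltW D20) ?(ltW sn).
  exists (E `^ eps); split; first exact: powR_gt0.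
  move=> n A dn PA; have [p [Ap sub]] := T2 n A dn PA; exists p; split => //.
  have sn : 0 < s ^ n by rewrite exprz_gt0.
  move=> y; rewrite /oball /snowflake /= => hy; apply: sub; rewrite /oball /=.
  rewrite ltNge; apply/negP => hle.
  have := ge0_ler_powR (ltW e0) _ _ hle.
  rewrite powRM ?(ltW E0) ?(ltW sn) // powR_exprz ?(ltW s0) //.
  rewrite !nnegrE mulr_ge0 ?(ltW E0) ?(ltW sn) ?d0 // => /(_ isT isT) hle'.
  by have := lt_le_trans hy hle'; rewrite ltxx.
move=> A tA; have [phi [hphi [T [tT conv]]]] := U A tA.
exists phi; split => //; exists T; split => //.
move=> e' e'0.
have ei0 : 0 < eps^-1 by rewrite invr_gt0.
have [i0 Hi] := conv (e' `^ eps^-1) (powR_gt0 _ e'0).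
exists i0 => i hi.
have [Z [dZ [f [g [mZ [hf [hg [h1 h2]]]]]]]] := Hi i hi.
have [nA [dA PA]] := tA (phi i); have [DA [DA0 [hDA _]]] := tileD _ _ dA PA.
have [nT [dT PT]] := tT; have [DT [DT0 [hDT _]]] := tileD _ _ dT PT.
rewrite /= in hf hg h1 h2 *.
rewrite (diam_snow e0 d0 DA0 hDA) (diam_snow e0 d0 DT0 hDT) /=.
rewrite hDA hDT /= in hf hg.
have ee : e' = (e' `^ eps^-1) `^ eps by rewrite -powRrM mulVf ?gt_eqF // powRr1 // ltW.
exists Z, (snowflake eps dZ), f, g; split; first exact: snowflake_metric e01 mZ.
split.
  move=> x y Ax Ay; rewrite /snowflake hf // powRM ?invr_ge0 ?(ltW DA0) ?d0 //.
  by rewrite powR_invr // ltW.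
split.
  move=> x y Ax Ay; rewrite /snowflake hg // powRM ?invr_ge0 ?(ltW DT0) ?d0 //.
  by rewrite powR_invr // ltW.
split.
  move=> x Ax; have [y [By lt]] := h1 x Ax; exists y; split => //.
  rewrite /snowflake ee; apply: gt0_ltr_powR; rewrite ?nnegrE ?powR_ge0 ?mZ.1 //.
move=> y By; have [x [Ax lt]] := h2 y By; exists x; split => //.
rewrite /snowflake ee; apply: gt0_ltr_powR; rewrite ?nnegrE ?powR_ge0 ?mZ.1 //.
Qed.
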